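(* Let $G$ be a finite abelian group, $R\subseteq \mathbb{Q}$ a subring, and $n\geq 1$ an integer. Let $S$ be the set of primes $\ell$ such that $\ell\mid \#G$ and $\ell^{-1}\notin R$. Then \[ Q_n(R,G)\cong \bigoplus_{\ell\in S}\mathrm{Syl}_{\ell}\big(Q_n(\mathbb{Z},G)\big) \] as $R$-modules, where the right-hand side is an $R$-module via the following structure on a finite abelian group $H$ all of whose prime divisors of $\#H$ are non-invertible in $R$: for $\frac{a}{b}\in R$ in lowest terms and $h\in H$, $\frac{a}{b}\cdot h := (h^{1/b})^a$, where $h^{1/b}$ is the unique element whose $b$-th power is $h$ (which exists since $\gcd(b,\#H)=1$).
   Context: For a ring $A$ and abelian group $G$, $A[G]$ is the group algebra, $[g]$ denotes $g$ viewed in $A[G]$, $I(A,G)$ is the kernel of the augmentation map $A[G]\to A$, $[g]\mapsto 1$, and $Q_n(A,G)=I(A,G)^n/I(A,G)^{n+1}$ (which for $A=\mathbb{Z}$ is a finite abelian group). For a finite abelian group $H$ and a prime $\ell$, $\mathrm{Syl}_\ell(H)$ is its $\ell$-Sylow subgroup, trivial if $\ell\nmid\#H$. *)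

(* Defs.v *)
From HB Require Import structures.
From mathcomp Require Import all_boot all_order all_algebra.
Set Implicit Arguments. Unset Strict Implicit. Unset Printing Implicit Defensive.
Import Order.TTheory GRing.Theory Num.Theory.
Local Open Scope ring_scope.

(* Group algebras A[G] for subrings A of Q are realised inside the ambient
   Q-vector space {ffun G -> rat}: an element sum_g a_g [g] is the function
   g |-> a_g, and [g] is the indicator function of g. *)
Section GroupAlgebra.
Variable G : finZmodType.
Local Notation V := {ffun G -> rat}.

Definition gbase (g : G) : V := [ffun x => (x == g)%:R].
Definition gmul (f h : V) : V := [ffun x => \sum_(y : G) f y * h (x - y)].
Definition gscale (r : rat) (f : V) : V := [ffun x => r * f x].
Definition in_galg (A : {pred rat}) (f : V) : Prop := forall g, f g \in A.
Definition augm (f : V) : rat := \sum_(g : G) f g.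
Definition in_aug (A : {pred rat}) (f : V) : Prop := in_galg A f /\ augm f = 0.

(* aug_pow A n f  <->  f \in I(A,G)^n  (with I^0 = A[G]);
   I^(n+1) = I^n * I is the additive subgroup generated by the products
   x * y with x \in I^n and y \in I. *)
Inductive aug_pow (A : {pred rat}) : nat -> V -> Prop :=
| aug_pow0 f : in_galg A f -> aug_pow A 0 f
| aug_pow_mul n x y : aug_pow A n x -> in_aug A y -> aug_pow A n.+1 (gmul x y)
| aug_pow_zero n : aug_pow A n.+1 0
| aug_pow_sub n x y : aug_pow A n.+1 x -> aug_pow A n.+1 y -> aug_pow A n.+1 (x - y).

Definition ZZ : {pred rat} := [pred x : rat | x \is a Num.int].

(* Q_n(A,G) = I(A,G)^n / I(A,G)^(n+1), presented as a subquotient: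
   elements are represented by x with aug_pow A n x, and two representatives
   are equal in Q_n(A,G) iff their difference lies in I^(n+1). *)
Definition Qn_eqv (A : {pred rat}) (n : nat) (x y : V) : Prop :=
  aug_pow A n.+1 (x - y).

(* Representatives of elements of Syl_l(Q_n(Z,G)): classes [x] in Q_n(Z,G)
   of l-power order, i.e. l^k [x] = 0 in Q_n(Z,G) for some k. *)
Definition Syl_rep (l n : nat) (x : V) : Prop :=
  aug_pow ZZ n x /\ exists k : nat, aug_pow ZZ n.+1 (x *+ (l ^ k)).

Definition Sprimes (R : {pred rat}) (l : nat) : bool :=
  [&& prime l, (l %| #|G|)%N & (l%:R)^-1 \notin R].

(* The R-module structure on Syl_l(Q_n(Z,G)) of the paper:
   for r = a/b in lowest terms (a = numq r, b = denq r > 0),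
   r . [h] = ([h]^(1/b))^a, where [h]^(1/b) = [z] is the element of the
   Sylow subgroup with b [z] = [h] (written additively).
   syl_act l n r h h'  <->  [h'] = r . [h]. *)
Definition syl_act (l n : nat) (r : rat) (h h' : V) : Prop :=
  exists z, [/\ Syl_rep l n z,
                Qn_eqv ZZ n (z *~ denq r) h &
                Qn_eqv ZZ n h' (z *~ numq r)].

(* The direct sum  (+)_{l \in S} Syl_l(Q_n(Z,G)) : an element is a family
   m : nat -> V whose l-th component (for l \in S) represents an element
   of Syl_l(Q_n(Z,G)); components outside S are irrelevant. *)
Definition DS_mem (R : {pred rat}) (n : nat) (m : nat -> V) : Prop :=
  forall l, Sprimes R l -> Syl_rep l n (m l).
Definition DS_eqv (R : {pred rat}) (n : nat) (m m' : nat -> V) : Prop :=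
  forall l, Sprimes R l -> Qn_eqv ZZ n (m l) (m' l).
Definition DS_add (m m' : nat -> V) : nat -> V := fun l => m l + m' l.
Definition DS_act (R : {pred rat}) (n : nat) (r : rat) (m m' : nat -> V) : Prop :=
  forall l, Sprimes R l -> syl_act l n r (m l) (m' l).

(* Q_n(R,G) is isomorphic, as an R-module, to the direct sum above:
   there is a map phi on representatives that is well defined and injective
   on classes, additive, R-linear and surjective. *)
Definition Qn_iso_DS (R : {pred rat}) (n : nat) : Prop :=
  exists phi : V -> (nat -> V),
  [/\ forall x, aug_pow R n x -> DS_mem R n (phi x),
      forall x y, aug_pow R n x -> aug_pow R n y ->
        (Qn_eqv R n x y <-> DS_eqv R n (phi x) (phi y)),
      forall x y, aug_pow R n x -> aug_pow R n y ->
        DS_eqv R n (phi (x + y)) (DS_add (phi x) (phi y)),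
      forall r x, r \in R -> aug_pow R n x ->
        DS_act R n r (phi x) (phi (gscale r x)) &
      forall m, DS_mem R n m -> exists2 x, aug_pow R n x & DS_eqv R n (phi x) m].

End GroupAlgebra.

(* Main.v *)
Require Import Defs.
From Stdlib Require Import ClassicalEpsilon.
From HB Require Import structures.
From mathcomp Require Import all_boot all_order all_algebra all_fingroup all_solvable zify.
Set Implicit Arguments. Unset Strict Implicit. Unset Printing Implicit Defensive.
Import Order.TTheory GRing.Theory Num.Theory.
Local Open Scope ring_scope.

Section Alg.
Variable G : finZmodType.
Local Notation V := {ffun G -> rat}.

Lemma gmulE (f h : V) x : gmul f h x = \sum_(y : G) f y * h (x - y).
Proof. by rewrite ffunE. Qed.

Lemma gmulDl (f f' h : V) : gmul (f + f') h = gmul f h + gmul f' h.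
Proof.
apply/ffunP=> x; rewrite !ffunE -big_split; apply: eq_bigr => y _.
by rewrite ffunE mulrDl.
Qed.

Lemma gmulNl (f h : V) : gmul (- f) h = - gmul f h.
Proof.
apply/ffunP=> x; rewrite !ffunE -sumrN; apply: eq_bigr => y _.
by rewrite ffunE mulNr.
Qed.

Lemma gmulC (f h : V) : gmul f h = gmul h f.
Proof.
apply/ffunP=> x; rewrite !gmulE.
rewrite (reindex_inj (can_inj (subKr x))) /=.
by apply: eq_bigr => y _; rewrite subKr mulrC.
Qed.

Lemma gmulDr (f h h' : V) : gmul f (h + h') = gmul f h + gmul f h'.
Proof. by rewrite gmulC gmulDl !(gmulC f). Qed.
Lemma gmulNr (f h : V) : gmul f (- h) = - gmul f h.
Proof. by rewrite gmulC gmulNl gmulC. Qed.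
Lemma gmulBl (f f' h : V) : gmul (f - f') h = gmul f h - gmul f' h.
Proof. by rewrite gmulDl gmulNl. Qed.
Lemma gmulBr (f h h' : V) : gmul f (h - h') = gmul f h - gmul f h'.
Proof. by rewrite gmulDr gmulNr. Qed.
Lemma gmul0l (h : V) : gmul 0 h = 0.
Proof. by apply/ffunP => x; rewrite !ffunE big1 // => y _; rewrite ffunE mul0r. Qed.
Lemma gmul0r (h : V) : gmul h 0 = 0.
Proof. by rewrite gmulC gmul0l. Qed.
Lemma gmulMnl (f h : V) k : gmul (f *+ k) h = gmul f h *+ k.
Proof. elim: k => [|k IH]; first by rewrite !mulr0n gmul0l.
by rewrite !mulrS gmulDl IH. Qed.
Lemma gmulMnr (f h : V) k : gmul f (h *+ k) = gmul f h *+ k.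
Proof. by rewrite gmulC gmulMnl gmulC. Qed.

Lemma gmulA (f h k : V) : gmul (gmul f h) k = gmul f (gmul h k).
Proof.
apply/ffunP=> x; rewrite !gmulE.
under eq_bigr do rewrite gmulE mulr_suml.
rewrite exchange_big /=; apply: eq_bigr => y _.
rewrite gmulE mulr_sumr.
rewrite (reindex_inj (addIr y)) /=.
apply: eq_bigr => z _; rewrite addrK mulrA; congr (_ * _ * k _).
by rewrite opprD addrA addrAC.
Qed.

Lemma gbaseE (a x : G) : gbase a x = (x == a)%:R.
Proof. by rewrite ffunE. Qed.

Lemma gbaseM (a b : G) : gmul (gbase a) (gbase b) = gbase (a + b).
Proof.
apply/ffunP=> x; rewrite gmulE gbaseE (bigD1 a) //= big1 => [|y /negPf ya].
  by rewrite gbaseE eqxx mul1r addr0 gbaseE subr_eq addrC.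
by rewrite gbaseE ya mul0r.
Qed.

Lemma gmul1 (h : V) : gmul (gbase (0 : G)) h = h.
Proof.
apply/ffunP=> x; rewrite gmulE (bigD1 0) //= big1 => [|y /negPf ya].
  by rewrite gbaseE eqxx mul1r addr0 subr0.
by rewrite gbaseE ya mul0r.
Qed.

Lemma gscaleE r (f : V) x : gscale r f x = r * f x.
Proof. by rewrite ffunE. Qed.
Lemma gscale_mull r (f h : V) : gmul (gscale r f) h = gscale r (gmul f h).
Proof.
apply/ffunP=> x; rewrite gscaleE !gmulE mulr_sumr; apply: eq_bigr => y _.
by rewrite gscaleE mulrA.
Qed.
Lemma gscaleB r (f h : V) : gscale r (f - h) = gscale r f - gscale r h.
Proof. by apply/ffunP=> x; rewrite !ffunE mulrBr. Qed.
Lemma gscale0 r : gscale r (0 : V) = 0.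
Proof. by apply/ffunP=> x; rewrite !ffunE mulr0. Qed.
Lemma gscaleA r s (f : V) : gscale r (gscale s f) = gscale (r * s) f.
Proof. by apply/ffunP=> x; rewrite !ffunE mulrA. Qed.
Lemma gscale1 (f : V) : gscale 1 f = f.
Proof. by apply/ffunP=> x; rewrite !ffunE mul1r. Qed.
Lemma gscale_nat k (f : V) : gscale k%:R f = f *+ k.
Proof. by apply/ffunP=> x; rewrite !ffunE ffunMnE mulr_natl. Qed.

Lemma card_mul (g : G) : g *+ #|G| = 0.
Proof.
have := expg_cardG (in_setT g); rewrite cardsT => /eqP.
by rewrite FinRing.zmodXgE => /eqP.
Qed.


Section Ring.
Variable A : {pred rat}.
Hypothesis HA : GRing.subring_closed A.

Lemma sr1 : 1 \in A. Proof. by case: HA. Qed.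
Lemma srB x y : x \in A -> y \in A -> x - y \in A.
Proof. by case: HA => _ H _; apply: H. Qed.
Lemma srM x y : x \in A -> y \in A -> x * y \in A.
Proof. by case: HA => _ _ H; apply: H. Qed.
Lemma sr0 : 0 \in A. Proof. by rewrite -(subrr 1) srB ?sr1. Qed.
Lemma srN x : x \in A -> - x \in A. Proof. by move=> h; rewrite -sub0r srB ?sr0. Qed.
Lemma srD x y : x \in A -> y \in A -> x + y \in A.
Proof. by move=> hx hy; rewrite -[y]opprK srB ?srN. Qed.
Lemma sr_nat k : k%:R \in A.
Proof. by elim: k => [|k IH]; rewrite ?sr0 // -addn1 natrD srD ?sr1. Qed.
Lemma sr_int (z : int) : z%:~R \in A.
Proof. by case: z => k; rewrite ?NegzE ?mulrNz ?srN ?sr_nat. Qed.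
Lemma sr_ZZ x : x \in ZZ -> x \in A.
Proof. by rewrite inE => /numqK <-; apply: sr_int. Qed.
Lemma sr_sum (I : finType) (F : I -> rat) : (forall i, F i \in A) -> \sum_i F i \in A.
Proof. by move=> h; apply: (big_ind (fun x => x \in A)) => //; [apply: sr0 | apply: srD]. Qed.

Lemma galg_gbase (g : G) : in_galg A (gbase g).
Proof. by move=> x; rewrite gbaseE; case: (x == g); rewrite ?sr1 ?sr0. Qed.
Lemma galgB (f h : V) : in_galg A f -> in_galg A h -> in_galg A (f - h).
Proof. by move=> hf hh x; rewrite !ffunE srB. Qed.
Lemma galg0 : in_galg A (0 : V).
Proof. by move=> x; rewrite ffunE sr0. Qed.
Lemma galgM (f h : V) : in_galg A f -> in_galg A h -> in_galg A (gmul f h).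
Proof. by move=> hf hh x; rewrite gmulE sr_sum // => y; rewrite srM. Qed.
Lemma galgZ r (f : V) : r \in A -> in_galg A f -> in_galg A (gscale r f).
Proof. by move=> hr hf x; rewrite gscaleE srM. Qed.

Lemma apB k (x y : V) : aug_pow A k x -> aug_pow A k y -> aug_pow A k (x - y).
Proof.
case: k => [|k] hx hy; last by apply: aug_pow_sub.
inversion hx; inversion hy; apply: aug_pow0; exact: galgB.
Qed.
Lemma ap0 k : aug_pow A k (0 : V).
Proof. by case: k => [|k]; [apply: aug_pow0; apply: galg0 | apply: aug_pow_zero]. Qed.
Lemma apD k (x y : V) : aug_pow A k x -> aug_pow A k y -> aug_pow A k (x + y).
Proof.
move=> hx hy; have -> : x + y = x - (0 - y) by rewrite sub0r opprK.
by apply: apB => //; apply: apB => //; apply: ap0. Qed.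
Lemma apMn k (x : V) m : aug_pow A k x -> aug_pow A k (x *+ m).
Proof. by move=> hx; elim: m => [|m IH]; [rewrite mulr0n; apply: ap0 | rewrite mulrS; apply: apD]. Qed.
Lemma apsum k (I : Type) (r : seq I) (P : pred I) (F : I -> V) :
  (forall i, P i -> aug_pow A k (F i)) -> aug_pow A k (\sum_(i <- r | P i) F i).
Proof. by move=> h; apply: (big_ind (aug_pow A k)) => //; [apply: ap0 | apply: apD]. Qed.

Lemma apZ k r (x : V) : r \in A -> aug_pow A k x -> aug_pow A k (gscale r x).
Proof.
move=> hr; elim=> {k x} [f hf|k x y hx IH hy|k|k x y hx IHx hy IHy].
- by apply: aug_pow0; apply: galgZ.
- by rewrite -gscale_mull; apply: aug_pow_mul.
- by rewrite gscale0; apply: aug_pow_zero.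
- by rewrite gscaleB; apply: aug_pow_sub.
Qed.

Lemma ap_ideal k (a b : V) : aug_pow A k a -> in_galg A b -> aug_pow A k (gmul a b).
Proof.
move=> ha hb; elim: ha => {k a} [f hf|k x y hx IH hy|k|k x y hx IHx hy IHy].
- by apply: aug_pow0; apply: galgM.
- by rewrite gmulA (gmulC y) -gmulA; apply: aug_pow_mul.
- by rewrite gmul0l; apply: aug_pow_zero.
- by rewrite gmulBl; apply: aug_pow_sub.
Qed.

Lemma ap_prod k m (a b : V) : aug_pow A k a -> aug_pow A m b -> aug_pow A (k + m) (gmul a b).
Proof.
move=> ha hb; elim: hb => {m b} [f hf|m x y hx IH hy|m|m x y hx IHx hy IHy].
- by rewrite addn0; apply: ap_ideal.
- by rewrite -gmulA addnS; apply: aug_pow_mul.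
- by rewrite gmul0r addnS; apply: aug_pow_zero.
- by rewrite gmulBr addnS; apply: aug_pow_sub; rewrite -addnS.
Qed.

Lemma ap1 (y : V) : in_aug A y -> aug_pow A 1 y.
Proof.
move=> hy; rewrite -(gmul1 y); apply: aug_pow_mul => //.
by apply: aug_pow0; apply: galg_gbase.
Qed.

End Ring.

Lemma ZZ_sr : GRing.subring_closed ZZ.
Proof.
split; rewrite ?inE ?rpred1 // => x y; rewrite !inE => hx hy.
  exact: rpredB. exact: rpredM.
Qed.

Lemma ap_mono (A B : {pred rat}) k (x : V) : {subset A <= B} -> aug_pow A k x -> aug_pow B k x.
Proof.
move=> AB; elim=> {k x} [f hf|k x y hx IH [hy1 hy2]|k|k x y hx IHx hy IHy].
- by apply: aug_pow0 => g; apply: AB.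
- by apply: aug_pow_mul => //; split=> // g; apply: AB.
- exact: aug_pow_zero.
- exact: aug_pow_sub.
Qed.


Local Notation N := #|G|.
Definition ee (g : G) : V := gbase g - gbase 0.

Lemma augm_gbase (g : G) : augm (gbase g) = 1.
Proof.
rewrite /augm (bigD1 g) //= big1 => [|x /negPf xg]; first by rewrite gbaseE eqxx addr0.
by rewrite gbaseE xg.
Qed.

Lemma augmB (f h : V) : augm (f - h) = augm f - augm h.
Proof. by rewrite /augm -sumrB; apply: eq_bigr => x _; rewrite !ffunE. Qed.

Lemma ee_aug g : in_aug ZZ (ee g).
Proof.
split; first by apply: galgB; [apply: ZZ_sr|apply: galg_gbase; apply: ZZ_sr|apply: galg_gbase; apply: ZZ_sr].
by rewrite augmB !augm_gbase subrr.
Qed.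

Lemma ee_mul a g : gmul (ee a) (ee g) = (gbase (a + g) - gbase a) - ee g.
Proof.
by rewrite /ee gmulBl !gmulBr !gbaseM !addr0 !add0r.
Qed.

Lemma ee_tors g : aug_pow ZZ 2 (ee g *+ N).
Proof.
have E : \sum_(0 <= j < N) gmul (ee (g *+ j)) (ee g) = 0 - ee g *+ N.
  under eq_bigr do rewrite ee_mul.
  rewrite sumrB; under eq_bigr do rewrite -mulrSr.
  rewrite (telescope_sumr (fun i => gbase (g *+ i))) // mulr0n card_mul subrr.
  by rewrite sumr_const_nat subn0.
have -> : ee g *+ N = 0 - \sum_(0 <= j < N) gmul (ee (g *+ j)) (ee g) by rewrite E !sub0r opprK.
apply: (apB ZZ_sr); first exact: (ap0 ZZ_sr).
apply: (apsum ZZ_sr).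
move=> j _; apply: aug_pow_mul; first by apply: (ap1 ZZ_sr); exact: ee_aug.
exact: ee_aug.
Qed.

Lemma aug_tors1 (y : V) : in_aug ZZ y -> aug_pow ZZ 2 (y *+ N).
Proof.
case=> hy ha.
have -> : y *+ N = \sum_(g : G) gscale (y g) (ee g *+ N).
  apply/ffunP => x; rewrite ffunMnE sum_ffunE.
  under eq_bigr do rewrite gscaleE ffunMnE mulrnAr.
  rewrite sumrMnl; congr (_ *+ _).
  under eq_bigr do rewrite /ee !ffunE mulrBr.
  rewrite sumrB (bigD1 x) //= big1 => [|z /negPf zx]; last by rewrite eq_sym zx mulr0.
  rewrite eqxx mulr1 addr0 -mulr_suml.
  by move: ha; rewrite /augm => ->; rewrite mul0r subr0.
apply: (apsum ZZ_sr).
move=> g _; apply: (apZ ZZ_sr); [exact: hy | exact: ee_tors].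
Qed.

Lemma aug_tors k (x : V) : aug_pow ZZ k.+1 x -> aug_pow ZZ k.+2 (x *+ N).
Proof.
move=> h.
suff H : forall m (x : V), aug_pow ZZ m x -> (0 < m)%N -> aug_pow ZZ m.+1 (x *+ N).
  exact: H h _.
move=> m {h}x; elim=> {m x} [f hf|k' x y hx IH hy|m|m x y hx IHx hy IHy] //.
- move=> _; rewrite -gmulMnr -addn2; apply: (ap_prod ZZ_sr); first exact: hx.
  exact: aug_tors1.
- by move=> _; rewrite mul0rn; apply: (ap0 ZZ_sr).
- by move=> _; rewrite mulrnBl; apply: (apB ZZ_sr); [apply: IHx | apply: IHy].
Qed.


Lemma mulrnA' (x : V) a b : x *+ (a * b) = x *+ a *+ b.
Proof. exact: mulrnA. Qed.

Lemma mulrzMnC (y : V) (a : int) c : y *~ a *+ c = y *+ c *~ a.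
Proof. by rewrite !pmulrn mulrzAC. Qed.

Lemma apZint A k (x : V) (z : int) : GRing.subring_closed A -> aug_pow A k x -> aug_pow A k (x *~ z).
Proof.
move=> HA hx; case: z => m.
  by rewrite -pmulrn; apply: apMn.
rewrite NegzE mulrNz -pmulrn -sub0r; apply: (apB HA); [exact: ap0 | exact: apMn].
Qed.

Lemma gcd_aug A k (v : V) a b : GRing.subring_closed A -> (0 < a)%N ->
  aug_pow A k.+1 (v *+ a) -> aug_pow A k.+1 (v *+ b) -> aug_pow A k.+1 (v *+ gcdn a b).
Proof.
move=> HA a0 ha hb; case: (egcdnP b a0) => km kn E _.
have -> : v *+ gcdn a b = v *+ (km * a) - v *+ (kn * b) by rewrite E mulrnDr addrAC subrr add0r.
by apply: (apB HA); rewrite mulnC mulrnA'; apply: apMn.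
Qed.

Lemma cop_aug A k (v : V) a b : GRing.subring_closed A -> (0 < a)%N -> coprime a b ->
  aug_pow A k.+1 (v *+ a) -> aug_pow A k.+1 (v *+ b) -> aug_pow A k.+1 v.
Proof.
move=> HA a0 cab ha hb; case: (egcdnP b a0) => km kn E _.
move: cab; rewrite /coprime => /eqP g1; rewrite g1 in E.
have -> : v = v *+ (km * a) - v *+ (kn * b) by rewrite E mulrnDr addrAC subrr add0r.
by apply: (apB HA); rewrite mulnC mulrnA'; apply: apMn.
Qed.

Section Main.
Variable R : {pred rat}.
Hypothesis HR : GRing.subring_closed R.

Definition inv_ok (d : nat) := (0 < d)%N /\ ((d%:R)^-1 : rat) \in R.

Lemma inv_ok1 : inv_ok 1.
Proof. by split=> //; rewrite invr1; apply: (sr1 HR). Qed.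

Lemma inv_okM a b : inv_ok a -> inv_ok b -> inv_ok (a * b).
Proof.
case=> a0 ha [b0 hb]; split; first by rewrite muln_gt0 a0.
by rewrite natrM invfM; apply: (srM HR).
Qed.

Definition dd (r : rat) := `|denq r|%N.

Lemma dd_eq r : (dd r)%:R = (denq r)%:~R :> rat.
Proof. by rewrite /dd pmulrn abszE ger0_norm // ltW // denq_gt0. Qed.

Lemma inv_ok_dd r : r \in R -> inv_ok (dd r).
Proof.
move=> hr; split; first by rewrite /dd absz_gt0 denq_neq0.
have [u [v /= huv]] := Bezoutz (numq r) (denq r).
have cop := coprime_num_den r.
move: huv; rewrite /gcdz; move: cop; rewrite /coprime => /eqP ->.
move/(congr1 (fun z : int => z%:~R : rat)); rewrite rmorphD !rmorphM /= numqE.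
rewrite -dd_eq => E.
have dn0 : (dd r)%:R != 0 :> rat by rewrite pnatr_eq0 /dd absz_eq0 denq_neq0.
have -> : ((dd r)%:R)^-1 = u%:~R * r + v%:~R :> rat.
  by apply: (mulIf dn0); rewrite mulVf // mulrDl -mulrA E.
apply: (srD HR); last exact: (sr_int HR).
exact: (srM HR (sr_int HR u) hr).
Qed.

Lemma S_coprime l d : Sprimes G R l -> inv_ok d -> coprime d l.
Proof.
case/and3P=> pl _ nl [d0 hd]; rewrite coprime_sym prime_coprime //.
apply/negP => /dvdnP [c dc]; move/negP: nl; apply.
have -> : (l%:R)^-1 = c%:R * (d%:R)^-1 :> rat.
  have l0 : l%:R != 0 :> rat by rewrite pnatr_eq0 -lt0n prime_gt0.
  have c0 : c%:R != 0 :> rat.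
    by rewrite pnatr_eq0 -lt0n; move: d0; rewrite dc muln_gt0 => /andP [].
  by rewrite dc natrM invfM mulrA mulfV // mul1r.
by apply: (srM HR) => //; apply: (sr_nat HR).
Qed.

Lemma notS_inv p : prime p -> (p %| #|G|)%N -> ~~ Sprimes G R p -> inv_ok p.
Proof.
move=> pp pN; rewrite /Sprimes pp pN /= negbK => h; split=> //; exact: prime_gt0.
Qed.

Lemma clear0 (f : V) : in_galg R f -> exists2 d, inv_ok d & in_galg ZZ (f *+ d).
Proof.
move=> hf; exists (\prod_(g : G) dd (f g)).
  apply: (big_ind inv_ok) => //; [exact: inv_ok1 | exact: inv_okM | ].
  by move=> g _; apply: inv_ok_dd.
move=> g; rewrite ffunMnE (bigD1 g) //= mulrnA inE.
have -> : f g *+ dd (f g) = (numq (f g))%:~R by rewrite numqE -dd_eq mulr_natr.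
rewrite -mulrzr; apply: rpredMn. by rewrite mul1r rpred_int.
Qed.

Lemma augmMn (f : V) m : augm (f *+ m) = augm f *+ m.
Proof. by rewrite /augm -sumrMnl; apply: eq_bigr => g _; rewrite ffunMnE. Qed.

Lemma clear k (x : V) : aug_pow R k x -> exists2 d, inv_ok d & aug_pow ZZ k (x *+ d).
Proof.
elim=> {k x} [f hf|k x y hx [d hd IH] [hy1 hy2]|k|k x y hx [d hd IHx] hy [e he IHy]].
- by have [d hd h] := clear0 hf; exists d => //; apply: aug_pow0.
- have [e he h] := clear0 hy1; exists (d * e)%N; first exact: inv_okM.
  rewrite mulrnA' -gmulMnl -gmulMnr; apply: aug_pow_mul => //.
  by split=> //; rewrite augmMn hy2 mul0rn.
- by exists 1; [exact: inv_ok1 | rewrite mulr1n; apply: aug_pow_zero].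
- exists (d * e)%N; first exact: inv_okM.
  rewrite mulrnBl; apply: (apB ZZ_sr); first by rewrite mulrnA'; apply: (apMn ZZ_sr).
  by rewrite (mulnC d e) mulrnA'; apply: (apMn ZZ_sr).
Qed.

Lemma uncl k (x : V) d : inv_ok d -> aug_pow ZZ k (x *+ d) -> aug_pow R k x.
Proof.
case=> d0 hd h; have -> : x = gscale (d%:R^-1) (x *+ d).
  rewrite -gscale_nat gscaleA mulVf ?gscale1 //.
  by rewrite pnatr_eq0 -lt0n.
apply: (apZ HR) => //; apply: (ap_mono _ h) => z; exact: (sr_ZZ HR).
Qed.


Variable n : nat.
Hypothesis n0 : (0 < n)%N.

Definition Erel l (x z : V) := exists M, coprime M l /\ aug_pow R n.+1 ((x - z) *+ M).

Lemma N_gt0 : (0 < N)%N.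
Proof. by apply/card_gt0P; exists 0. Qed.

Lemma tors (y : V) : aug_pow ZZ n y -> aug_pow ZZ n.+1 (y *+ N).
Proof. by move: n0; case: n => // k _; apply: aug_tors. Qed.

Lemma Lsyl l k M (v : V) : Sprimes G R l -> aug_pow ZZ n.+1 (v *+ l ^ k) ->
  coprime M l -> aug_pow R n.+1 (v *+ M) -> aug_pow ZZ n.+1 v.
Proof.
move=> hl hk cM hM; have [d hd h] := clear hM; rewrite -mulrnA' in h.
have pl : prime l by case/and3P: hl.
apply: (cop_aug ZZ_sr _ _ hk h); first by rewrite expn_gt0 prime_gt0.
apply: coprimeXl; rewrite coprime_sym coprimeMl cM /=; exact: S_coprime hl hd.
Qed.

Lemma syl_sub l (z z' : V) : Syl_rep l n z -> Syl_rep l n z' -> Syl_rep l n (z - z').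
Proof.
case=> hz [k1 h1] [hz' [k2 h2]]; split; first exact: (apB ZZ_sr).
exists (k1 + k2)%N; rewrite expnD mulrnBl; apply: (apB ZZ_sr).
  by rewrite mulrnA'; apply: (apMn ZZ_sr).
by rewrite mulnC mulrnA'; apply: (apMn ZZ_sr).
Qed.

Lemma syl_add l (z z' : V) : Syl_rep l n z -> Syl_rep l n z' -> Syl_rep l n (z + z').
Proof.
case=> hz [k1 h1] [hz' [k2 h2]]; split; first exact: (apD ZZ_sr).
exists (k1 + k2)%N; rewrite expnD mulrnDl; apply: (apD ZZ_sr).
  by rewrite mulrnA'; apply: (apMn ZZ_sr).
by rewrite mulnC mulrnA'; apply: (apMn ZZ_sr).
Qed.

Lemma Uniq l (x z z' : V) : Sprimes G R l -> Syl_rep l n z -> Syl_rep l n z' ->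
  Erel l x z -> Erel l x z' -> aug_pow ZZ n.+1 (z - z').
Proof.
move=> hl sz sz' [M1 [c1 h1]] [M2 [c2 h2]].
have [_ [k hk]] := syl_sub sz sz'.
apply: (Lsyl (M := (M1 * M2)%N) hl hk); first by rewrite coprimeMl c1 c2.
have -> : z - z' = (x - z') - (x - z) by rewrite opprB [RHS]addrC addrA subrK.
rewrite mulrnBl; apply: (apB HR).
  by rewrite mulnC mulrnA'; apply: (apMn HR).
by rewrite mulrnA'; apply: (apMn HR).
Qed.

Lemma exist_z l (x : V) : Sprimes G R l -> aug_pow R n x -> exists z, Syl_rep l n z /\ Erel l x z.
Proof.
move=> hl hx; have pl : prime l by case/and3P: hl.
have [d hd hy] := clear hx.
have hN := tors hy.
have [b cb Nb] := pfactor_coprime pl N_gt0.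
set a := (l ^ logn l N)%N in Nb.
have b0 : (0 < b)%N by move: N_gt0; rewrite Nb muln_gt0 => /andP [].
have d0 : (0 < d)%N by case: hd.
have bd0 : (0 < b * d)%N by rewrite muln_gt0 b0 d0.
have cbda : coprime (b * d) a.
  rewrite coprimeMl; apply/andP; split; apply: coprimeXr; first by rewrite coprime_sym.
  exact: S_coprime hl hd.
case: (egcdnP a bd0) => km kn E _; move: cbda; rewrite /coprime => /eqP g1.
rewrite g1 in E.
exists (x *+ d *+ (b * km)); split; [split|].
- exact: (apMn ZZ_sr).
- exists (logn l N); rewrite -mulrnA' -mulrnA' -/a.
  have -> : ((b * km) * a = N * km)%N by rewrite [in RHS]Nb; lia.
  by rewrite mulnA !mulrnA'; apply: (apMn ZZ_sr).
- exists b; split; first by rewrite coprime_sym.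
  have E2 : (d * (b * km) = kn * a + 1)%N by lia.
  rewrite -mulrnA' E2 mulrnDr mulr1n opprD addrA addrAC subrr sub0r mulNrn.
  have -> : ((x *+ (kn * a)) *+ b) = (x *+ N) *+ kn.
    by rewrite -!mulrnA' [in RHS]Nb; congr (_ *+ _); lia.
  rewrite -sub0r; apply: (apB HR); first exact: ap0.
  apply: (apMn HR); apply: (uncl hd).
  by rewrite -mulrnA' mulnC mulrnA'.
Qed.

Lemma Jlem (v : V) : aug_pow R n.+1 (v *+ N) ->
  (forall l, Sprimes G R l -> exists M, coprime M l /\ aug_pow R n.+1 (v *+ M)) ->
  aug_pow R n.+1 v.
Proof.
move=> hN H.
suff: forall B m, (m < B)%N -> (0 < m)%N -> (m %| N)%N -> aug_pow R n.+1 (v *+ m) ->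
    aug_pow R n.+1 v by move/(_ N.+1 N); apply => //; exact: N_gt0.
elim=> // B IH m mB m0 mN hm.
case: (leqP m 1) => m1.
  by move: hm; have -> : m = 1%N by apply/eqP; rewrite eqn_leq m1 m0.
  have pp := pdiv_prime m1; have pm := pdiv_dvd m.
  have pN := dvdn_trans pm mN.
  case hS: (Sprimes G R (pdiv m)).
    have [M [cM hM]] := H _ hS.
    have hg := gcd_aug HR m0 hm hM.
    apply: (IH (gcdn m M)) => //.
    + have gm : (gcdn m M <= m)%N by apply: dvdn_leq => //; apply: dvdn_gcdl.
      have : gcdn m M != m.
        apply/negP => /eqP gE; move: cM; rewrite coprime_sym prime_coprime // => /negP; apply.
        by apply: (dvdn_trans pm); rewrite -gE dvdn_gcdr.
      by move=> gnm; rewrite -ltnS; apply: (leq_trans _ mB); rewrite ltnS ltn_neqAle gnm gm.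
    + by rewrite gcdn_gt0 m0.
    + exact: dvdn_trans (dvdn_gcdl _ _) mN.
  have [p0 hp] := notS_inv pp pN (negbT hS).
  have E := divnK pm.
  apply: (IH (m %/ pdiv m)%N).
  + by rewrite -ltnS; apply: (leq_trans _ mB); rewrite ltnS ltn_Pdiv // prime_gt1.
  + by rewrite divn_gt0 // dvdn_leq.
  + by apply: (dvdn_trans _ mN); apply/dvdnP; exists (pdiv m); rewrite mulnC E.
  + have -> : v *+ (m %/ pdiv m) = gscale ((pdiv m)%:R^-1) (v *+ m).
      have -> : v *+ m = (v *+ (m %/ pdiv m)) *+ pdiv m by rewrite -mulrnA' E.
      rewrite -(gscale_nat (pdiv m)) gscaleA mulVf ?gscale1 //.
      by rewrite pnatr_eq0 -lt0n.
    by apply: (apZ HR).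
Qed.


Lemma Erel_add l (x y z w : V) : Erel l x z -> Erel l y w -> Erel l (x + y) (z + w).
Proof.
move=> [M1 [c1 h1]] [M2 [c2 h2]]; exists (M1 * M2)%N; split; first by rewrite coprimeMl c1.
rewrite opprD addrACA mulrnDl; apply: (apD HR).
  by rewrite mulrnA'; apply: (apMn HR).
by rewrite mulnC mulrnA'; apply: (apMn HR).
Qed.

Lemma Erel_R l (x y w : V) : aug_pow R n.+1 (x - y) -> Erel l y w -> Erel l x w.
Proof.
move=> hxy [M [c h]]; exists M; split => //.
have -> : x - w = (x - y) + (y - w) by rewrite addrA subrK.
by rewrite mulrnDl; apply: (apD HR) => //; apply: (apMn HR).
Qed.

Lemma Erel_Z l (x z w : V) : aug_pow ZZ n.+1 (z - w) -> Erel l x z -> Erel l x w.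
Proof.
move=> hzw [M [c h]]; exists M; split => //.
have -> : x - w = (x - z) + (z - w) by rewrite addrA subrK.
rewrite mulrnDl; apply: (apD HR) => //; apply: (apMn HR).
by apply: (ap_mono _ hzw) => q; apply: (sr_ZZ HR).
Qed.

Lemma Erel_sum l (m : nat -> V) : prime l ->
  (forall l', Sprimes G R l' -> Syl_rep l' n (m l')) ->
  forall s : seq nat, exists M, coprime M l /\
    aug_pow ZZ n.+1 ((\sum_(l' <- s | Sprimes G R l' && (l' != l)) m l') *+ M).
Proof.
move=> pl hm; elim=> [|l' s [M [cM hM]]].
  by exists 1%N; split; [exact: coprime1n | rewrite big_nil mul0rn; apply: (ap0 ZZ_sr)].
rewrite big_cons; case: ifP => [/andP [hS ne]|_]; last by exists M.
have [_ [k hk]] := hm _ hS.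
have pl' : prime l' by case/and3P: hS.
exists (M * l' ^ k)%N; split.
  rewrite coprimeMl cM /=; apply: coprimeXl; rewrite prime_coprime // dvdn_prime2 //.
rewrite mulrnDl; apply: (apD ZZ_sr).
  by rewrite mulnC mulrnA'; apply: (apMn ZZ_sr).
by rewrite mulrnA'; apply: (apMn ZZ_sr).
Qed.

Lemma act_lem l r (x h : V) : r \in R -> Sprimes G R l -> Syl_rep l n h -> Erel l x h ->
  exists z, [/\ Syl_rep l n z, aug_pow ZZ n.+1 (z *~ denq r - h),
     Syl_rep l n (z *~ numq r) & Erel l (gscale r x) (z *~ numq r)].
Proof.
move=> hr hl [hh [k hk]] [M [cM hM]].
have pl : prime l by case/and3P: hl.
have hb := inv_ok_dd hr; set b := dd r in hb.
have b0 : (0 < b)%N by case: hb.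
have cb : coprime b (l ^ k) by apply: coprimeXr; exact: S_coprime hl hb.
case: (egcdnP (l ^ k) b0) => km kn E _; move: cb; rewrite /coprime => /eqP g1.
rewrite g1 in E.
have Db : denq r = b%:Z by rewrite /b /dd abszE ger0_norm // ltW // denq_gt0.
have syz : Syl_rep l n (h *+ km).
  split; first exact: (apMn ZZ_sr).
  by exists k; rewrite -mulrnA' mulnC mulrnA'; apply: (apMn ZZ_sr).
exists (h *+ km); split => //.
- rewrite Db -pmulrn -mulrnA' E mulrnDr mulr1n addrK.
  by rewrite mulnC mulrnA'; apply: (apMn ZZ_sr).
- case: syz => s1 [k1 s2]; split; first exact: (apZint _ ZZ_sr).
  by exists k1; rewrite mulrzMnC; apply: (apZint _ ZZ_sr).
- exists (M * b)%N; split; first by rewrite coprimeMl cM /=; exact: S_coprime hl hb.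
  have e1 : gscale r x *+ b = x *~ numq r.
    apply/ffunP => g; rewrite ffunMnE gscaleE ffunMzE -mulrzl numqE -dd_eq.
    by rewrite -mulrnAl mulr_natr.
  have e2 : h *+ km *~ numq r *+ b = (h + h *+ l ^ k *+ kn) *~ numq r.
    rewrite mulrzMnC -mulrnA' E.
    by rewrite mulrnDr mulr1n addrC (mulnC kn) mulrnA'.
  rewrite mulnC mulrnA' mulrnBl e1 e2 mulrzDl opprD addrA -mulrzBl mulrnBl.
  apply: (apB HR).
    by rewrite mulrzMnC; apply: (apZint _ HR).
  apply: (ap_mono _ (x := _ *+ _)) => [q|]; first exact: (sr_ZZ HR).
  by apply: (apMn ZZ_sr); apply: (apZint _ ZZ_sr); apply: (apMn ZZ_sr).
Qed.


Lemma Erel_diff l (x y w : V) : Erel l x w -> Erel l y w ->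
  exists M, coprime M l /\ aug_pow R n.+1 ((x - y) *+ M).
Proof.
move=> [M1 [c1 h1]] [M2 [c2 h2]]; exists (M1 * M2)%N; split; first by rewrite coprimeMl c1.
have -> : x - y = (x - w) - (y - w) by rewrite opprB addrA subrK.
rewrite mulrnBl; apply: (apB HR).
  by rewrite mulrnA'; apply: (apMn HR).
by rewrite mulnC mulrnA'; apply: (apMn HR).
Qed.

End Main.
End Alg.


Theorem proposition1p4 (G : finZmodType) (R : {pred rat}) (n : nat) :
  GRing.subring_closed R -> (1 <= n)%N -> Qn_iso_DS G R n.
Proof.
move=> HR n0.
pose phi := fun (x : {ffun G -> rat}) (l : nat) =>
  epsilon (inhabits (0 : {ffun G -> rat})) (fun z => Syl_rep l n z /\ Erel R n l x z).
have spec : forall x l, aug_pow R n x -> Sprimes G R l ->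
    Syl_rep l n (phi x l) /\ Erel R n l x (phi x l).
  move=> x l hx hl; rewrite /phi; apply: (epsilon_spec (inhabits (0 : {ffun G -> rat})) (fun z => Syl_rep l n z /\ Erel R n l x z)); by case: (exist_z HR n0 hl hx) => z [h1 h2]; exists z.
exists phi; split.
- by move=> x hx l hl; case: (spec x l hx hl).
- move=> x y hx hy; split.
    move=> hxy l hl; have [s1 e1] := spec x l hx hl; have [s2 e2] := spec y l hy hl.
    exact: (Uniq HR hl s1 s2 e1 (Erel_R HR hxy e2)).
  move=> H; apply: (Jlem HR).
    have hxy : aug_pow R n (x - y) by apply: (apB HR).
    have [d hd h] := clear HR hxy.
    apply: (uncl HR hd); rewrite mulrnAC; exact (tors n0 h).
  move=> l hl; have [s1 e1] := spec x l hx hl; have [s2 e2] := spec y l hy hl.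
  exact: (Erel_diff HR (Erel_Z HR (H l hl) e1) e2).
- move=> x y hx hy l hl.
  have hxy : aug_pow R n (x + y) by apply: (apD HR).
  have [s1 e1] := spec x l hx hl; have [s2 e2] := spec y l hy hl.
  have [s3 e3] := spec _ l hxy hl.
  exact: (Uniq HR hl s3 (syl_add s1 s2) e3 (Erel_add HR e1 e2)).
- move=> r x hr hx l hl.
  have [s1 e1] := spec x l hx hl.
  have hrx : aug_pow R n (gscale r x) by apply: (apZ HR).
  have [s2 e2] := spec _ l hrx hl.
  have [z [sz hz sza eza]] := act_lem HR hr hl s1 e1.
  exists z; split => //.
  exact: (Uniq HR hl s2 sza e2 eza).
- move=> m hm.
  set x := \sum_(l <- primes #|G| | Sprimes G R l) m l.
  have hx : aug_pow R n x.
    apply: (ap_mono (A := ZZ)) => [q|]; first exact: (sr_ZZ HR).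
    by apply: (apsum ZZ_sr) => l hl; case: (hm l hl).
  exists x => // l hl.
  have [s1 e1] := spec x l hx hl.
  have pl : prime l by case/and3P: hl.
  apply: (Uniq HR hl s1 (hm l hl) e1).
  have [M [cM hM]] := Erel_sum pl hm (primes #|G|).
  exists M; split => //.
  have -> : x - m l = \sum_(l' <- primes #|G| | Sprimes G R l' && (l' != l)) m l'.
    rewrite /x -big_filter (bigD1_seq l) /=; last exact: filter_uniq (primes_uniq _).
      by rewrite addrC addrK big_filter_cond.
    rewrite mem_filter hl mem_primes pl N_gt0 /=; by case/and3P: hl.
  apply: (ap_mono (A := ZZ)) => [q|]; first exact: (sr_ZZ HR).
  exact: hM.
Qed.
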